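(* Let $G$ be a finite group with $|G|=p^\alpha q$, where $p$ and $q$ are primes and $p$ divides $|G|$. Then $\mathcal{A}_p(G)'/G$, $\mathcal{S}_p(G)'/G$ and $\mathcal{B}_p(G)'/G$ are all contractible finite spaces.
   Context: $\mathcal{S}_p(G)$ is the poset of non-trivial $p$-subgroups of $G$, $\mathcal{A}_p(G)$ its subposet of non-trivial elementary abelian $p$-subgroups, $\mathcal{B}_p(G)=\{P\in\mathcal{S}_p(G):P=\mathcal{O}_p(N_G(P))\}$ ($\mathcal{O}_p(H)$ = largest normal $p$-subgroup). $G$ acts by conjugation. For a poset $X$, $X'$ is the poset of non-empty chains ordered by inclusion with componentwise $G$-action; $X'/G$ is the orbit poset ($\overline{c}\le\overline{d}$ iff some representatives satisfy $c_1\subseteq d_1$). Finite posets are finite $T_0$ spaces whose open sets are the down-sets. *)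

(* Defs.v *)
From HB Require Import structures.
From mathcomp Require Import all_boot all_order all_algebra all_fingroup all_solvable.
From mathcomp Require Import all_classical all_reals.
From mathcomp Require Import topology.
From mathcomp Require Import Rstruct Rstruct_topology.
From Stdlib Require Rdefinitions.

Set Implicit Arguments.
Unset Strict Implicit.
Unset Printing Implicit Defensive.

Local Open Scope classical_set_scope.

(* Finite posets as finite T0 spaces: open sets are the down-sets.     *)

Definition finspace (T : choiceType) (le : rel T) : Type := T.

HB.instance Definition _ (T : choiceType) (le : rel T) :=
  Choice.on (finspace le).

Definition downset_open (T : choiceType) (le : rel T) : set_system (finspace le) :=
  fun A => forall x y : T, A x -> le y x -> A y.
Arguments downset_open {T} le _.

Lemma downset_openT (T : choiceType) (le : rel T) : downset_open le setT.
Proof. by []. Qed.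

Lemma downset_openI (T : choiceType) (le : rel T) : setI_closed (downset_open le).
Proof. by move=> A B oA oB x y [Ax Bx] yx; split; [exact: oA _ _ Ax yx|exact: oB _ _ Bx yx]. Qed.

Lemma downset_open_bigU (T : choiceType) (le : rel T) (I : Type)
  (f : I -> set (finspace le)) :
  (forall i, downset_open le (f i)) -> downset_open le (\bigcup_i f i).
Proof. by move=> of_ x y [i _ fx] yx; exists i => //; exact: of_ _ _ _ fx yx. Qed.

HB.instance Definition _ (T : choiceType) (le : rel T) :=
  isOpenTopological.Build (finspace le)
    (@downset_openT T le) (@downset_openI T le) (@downset_open_bigU T le).

Local Open Scope ring_scope.

Definition contractible (X : topologicalType) : Prop :=
  exists (x0 : X) (H : X * Rdefinitions.R -> X),
    {within [set: X] `*` `[0%R, 1%R], continuous H} /\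
    (forall x, H (x, 0%R) = x) /\ (forall x, H (x, 1%R) = x0).

Local Close Scope ring_scope.

Local Close Scope classical_set_scope.
Section PSubgroupPosets.
Variable gT : finGroupType.
Implicit Types (G : {group gT}) (p : nat).
Local Open Scope group_scope.

Definition Sp p G : {set {set gT}} :=
  [set P : {set gT} | [&& group_set P, P \subset G, p.-group P & P != 1]].

Definition Ap p G : {set {set gT}} :=
  [set P in Sp p G | p.-abelem P].

Definition Bp p G : {set {set gT}} :=
  [set P in Sp p G | P == 'O_p('N_G(P))].

Definition chains (X : {set {set gT}}) : {set {set {set gT}}} :=
  [set c : {set {set gT}} | [&& c != finset.set0, c \subset X &
     [forall a in c, forall b in c, (a \subset b) || (b \subset a)]]].

Definition conj_chain (c : {set {set gT}}) (g : gT) : {set {set gT}} :=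
  [set P :^ g | P in c].

Definition chain_orbit G (c : {set {set gT}}) : {set {set {set gT}}} :=
  [set conj_chain c g | g in G].

(* the points of X'/G : the G-orbits of non-empty chains of X *)
Definition orbits G (X : {set {set gT}}) : {set {set {set {set gT}}}} :=
  [set chain_orbit G c | c in chains X].

Definition orbit_pt G (X : {set {set gT}}) : Type :=
  {O : {set {set {set gT}}} | O \in orbits G X}.

Definition orbit_le G (X : {set {set gT}}) : rel (orbit_pt G X) :=
  fun O D => [exists c in val O, exists d in val D, c \subset d].

Definition orbit_space G (X : {set {set gT}}) : topologicalType :=
  finspace (@orbit_le G X).

End PSubgroupPosets.

(* Main.v *)
Require Import Defs.
From mathcomp Require Import all_boot all_order all_algebra all_fingroup all_solvable.
From mathcomp Require Import all_classical all_reals topology.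
From mathcomp Require Import Rstruct Rstruct_topology.
From mathcomp Require Import lra.
From mathcomp Require Import integral_char.
From Stdlib Require Import Relation_Operators Operators_Properties.
From mathcomp Require Import fintype finset.

Module TopoM.
Import Order.TTheory GRing.Theory Num.Theory.
Set Implicit Arguments.
Unset Strict Implicit.
Unset Printing Implicit Defensive.
Local Open Scope classical_set_scope.
Local Open Scope ring_scope.

Lemma ex_delta (l : seq Rdefinitions.R) (s : Rdefinitions.R) :
  exists2 d : Rdefinitions.R, 0 < d & forall apt, apt \in l -> apt != s -> d <= `|s - apt|.
Proof.
elim: l => [|b l [d d0 Hd]]; first by exists 1 => //.
have [->|bs] := eqVneq b s.
  by exists d => // apt; rewrite inE => /orP[/eqP->|/Hd]; [rewrite eqxx|].
exists (Num.min d `|s - b|).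
  by rewrite lt_min d0 normr_gt0 subr_eq0 eq_sym.
move=> apt; rewrite inE => /orP[/eqP-> _|al aS]; first by rewrite ge_min lexx orbT.
by rewrite ge_min Hd.
Qed.

Section TL.
Variables (T : choiceType) (le : rel T).
Hypothesis le_refl : reflexive le.

Definition monof (f : T -> T) := forall x y, le x y -> le (f x) (f y).
Definition cmpf (f g : T -> T) := monof f /\ monof g /\
  ((forall x, le (f x) (g x)) \/ (forall x, le (g x) (f x))).

Variables (x0 : T) (m : nat) (h : nat -> T -> T).
Hypothesis h0 : forall x, h 0%N x = x.
Hypothesis hm : forall x, h m x = x0.
Hypothesis hc : forall i, (i < m)%N -> cmpf (h i) (h i.+1).

Local Notation R := Rdefinitions.R.
Definition topf i : T -> T :=
  if pselect (forall x, le (h i x) (h i.+1 x)) then h i.+1 else h i.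
Definition apt (i : nat) : R := i%:R + 2^-1.
Definition Lc (t : R) := count (fun i => apt i < t * m%:R) (iota 0 m).
Definition halfp (t : R) := has (fun i => t * m%:R == apt i) (iota 0 m).
Definition Hf (p : finspace le * R) : finspace le :=
  if halfp p.2 then topf (Lc p.2) p.1 else h (Lc p.2) p.1.

Lemma hmono i : (i <= m)%N -> monof (h i).
Proof.
case: i => [|i] lim; last by case: (hc lim) => _ [].
have [m0|mpos] := posnP m; first by move=> x y; rewrite !h0.
by case: (hc mpos).
Qed.

Lemma topf_ge i : (i < m)%N -> forall x, le (h i x) (topf i x) /\ le (h i.+1 x) (topf i x).
Proof.
move=> im x; rewrite /topf; destruct (pselect _) as [H|H]; first by rewrite le_refl H.
case: (hc im) => _ [_ [H'|H']]; first by exfalso; apply: H.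
by rewrite le_refl H'.
Qed.

Lemma topf_mono i : (i < m)%N -> monof (topf i).
Proof. by move=> im; rewrite /topf; destruct (pselect _); apply: hmono => //; apply: ltnW. Qed.

Lemma a_gt0 i : 0 < apt i.
Proof. rewrite /apt; have : (0:R) <= i%:R by rewrite ler0n. have : (0:R) < 2^-1 by rewrite invr_gt0. lra. Qed.

Lemma a_lt i j : (apt i < apt j) = (i < j)%N.
Proof. by rewrite /apt ltrD2r ltr_nat. Qed.

Lemma count_lt_iota j : (j <= m)%N -> count (fun i => (i < j)%N) (iota 0 m) = j.
Proof.
move=> jm; rewrite -(subnKC jm) iotaD count_cat add0n.
rewrite (@eq_in_count _ _ predT); last by move=> i; rewrite mem_iota /=.
rewrite count_predT size_iota (@eq_in_count _ _ pred0) ?count_pred0 ?addn0 //.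
by move=> i; rewrite mem_iota /= => /andP[/leq_gtF ->].
Qed.

Lemma Lc_le t : (Lc t <= m)%N.
Proof. by rewrite /Lc (leq_trans (count_size _ _)) // size_iota. Qed.

Lemma half_Lc t : halfp t -> exists2 j, (j < m)%N & t * m%:R = apt j /\ Lc t = j.
Proof.
case/hasP => j; rewrite mem_iota /= add0n => jm /eqP E; exists j => //; split => //.
rewrite /Lc E (@eq_in_count _ _ (fun i => (i < j)%N)) ?count_lt_iota ?(ltnW jm) //.
by move=> i _; rewrite /= a_lt.
Qed.

Lemma Lc0 : Lc 0 = 0%N.
Proof.
rewrite /Lc mul0r (@eq_in_count _ _ pred0) ?count_pred0 //.
by move=> i _ /=; rewrite ltNge (ltW (a_gt0 i)).
Qed.

Lemma half0 : halfp 0 = false.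
Proof.
by apply/hasP => -[i _]; rewrite mul0r => /eqP E; move: (a_gt0 i); rewrite -E ltxx.
Qed.

Lemma Lc1 : Lc 1 = m.
Proof.
rewrite /Lc mul1r (@eq_in_count _ _ predT) ?count_predT ?size_iota //.
move=> i; rewrite mem_iota /= add0n => im; rewrite /apt.
have : (i.+1%:R : R) <= m%:R by rewrite ler_nat.
rewrite -addn1 natrD. have : (0:R) < 2^-1 by rewrite invr_gt0.
have : (2^-1 : R) < 1 by rewrite invf_lt1 // ltr1n. lra.
Qed.

Lemma half1 : halfp 1 = false.
Proof.
apply/hasP => -[i]; rewrite mem_iota /= add0n mul1r => im /eqP E.
have : (i.+1%:R : R) <= m%:R by rewrite ler_nat.
rewrite -addn1 natrD E /apt. have : (2^-1 : R) < 1 by rewrite invf_lt1 // ltr1n. lra.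
Qed.

Lemma local t : exists2 d : R, 0 < d & forall t', `|t - t'| < d ->
  (halfp t = false -> halfp t' = false /\ Lc t' = Lc t) /\
  (halfp t -> t' = t \/ (halfp t' = false /\ (Lc t' = Lc t \/ Lc t' = (Lc t).+1))).
Proof.
set s := t * m%:R.
have [d d0 Hd] := ex_delta [seq apt i | i <- iota 0 m] s.
have mp : (0:R) < m%:R + 1 by rewrite ltr_wpDl ?ler0n.
exists (d / (m%:R + 1)); first by rewrite divr_gt0.
move=> t' tt'.
have ss' : `|s - t' * m%:R| < d.
  rewrite /s -mulrBl normrM (ger0_norm (ler0n _ _)).
  have := tt'; rewrite ltr_pdivlMr // => H.
  apply: le_lt_trans H; rewrite ler_wpM2l ?normr_ge0 //. lra.
have key : forall i, (i < m)%N -> apt i != s ->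
    ((apt i < t' * m%:R) = (apt i < s)) /\ (t' * m%:R != apt i).
  move=> i im ais; have := Hd (apt i); rewrite map_f ?mem_iota //= => /(_ isT ais) di.
  move: ais; rewrite neq_lt => /orP[ais|ais].
    have : `|s - apt i| = s - apt i by rewrite ger0_norm // subr_ge0 ltW.
    move=> E; rewrite E in di; rewrite ais; split.
      apply/idP; move: ss'; rewrite ltr_norml; lra.
    apply/eqP => E'; move: ss'; rewrite E' ltr_norml; lra.
  have : `|s - apt i| = apt i - s by rewrite ltr0_norm ?opprB // subr_lt0.
  move=> E; rewrite E in di; rewrite (ltNge _ s) (ltW ais) /=; split.
    apply/negbTE; rewrite -leNgt; move: ss'; rewrite ltr_norml => H; apply/ltW; lra.
  apply/eqP => E'; move: ss'; rewrite E' ltr_norml; lra.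
split.
  move=> hf; have nh : forall i, i \in iota 0 m -> apt i != s.
    move=> i iI; apply/eqP => E; move: hf; rewrite /halfp.
    by have -> : has (fun i => t * m%:R == apt i) (iota 0 m) by apply/hasP; exists i; rewrite // E eqxx.
  split.
    apply/negbTE/hasP => -[i iI /eqP E].
    have im : (i < m)%N by move: iI; rewrite mem_iota.
    by case: (key i im (nh i iI)) => _; rewrite E eqxx.
  apply: eq_in_count => i iI; have im : (i < m)%N by move: iI; rewrite mem_iota.
  by case: (key i im (nh i iI)).
move=> /half_Lc [j jm [sj Lj]]; rewrite Lj.
have [->|tt] := eqVneq t' t; first by left.
right.
have mpos : (0 : R) < m%:R by rewrite ltr0n (leq_ltn_trans _ jm).
have ns : t' * m%:R != s.
  apply: contra tt => /eqP E; apply/eqP.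
  by apply: (mulIf (lt0r_neq0 mpos)).
split.
  apply/negbTE/hasP => -[i iI /eqP E].
  have im : (i < m)%N by move: iI; rewrite mem_iota.
  have [ais|ais] := eqVneq (apt i) s; first by move: ns; rewrite E ais eqxx.
  by case: (key i im ais) => _; rewrite E eqxx.
set c := apt j < t' * m%:R.
have -> : Lc t' = count (fun i => (i < j)%N || ((i == j) && c)) (iota 0 m).
  apply: eq_in_count => i iI; have im : (i < m)%N by move: iI; rewrite mem_iota.
  have [->|ij] := eqVneq i j; first by rewrite ltnn.
  have ais : apt i != s by rewrite /s sj; apply: contra ij => /eqP; rewrite /apt => /addIr /eqP; rewrite eqr_nat.
  case: (key i im ais) => -> _; by rewrite /s sj a_lt orbF.
case: c.
  right; rewrite -[in RHS](@count_lt_iota j.+1 jm); apply: eq_in_count => i _.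
  by rewrite /= andbT ltnS [(i <= j)%N]leq_eqVlt orbC.
left; rewrite -[in RHS](@count_lt_iota j (ltnW jm)); apply: eq_in_count => i _.
by rewrite /= andbF orbF.
Qed.

Lemma mono_open f (U : set (finspace le)) : monof f -> open U -> @open (finspace le) (f @^-1` U).
Proof.
move=> mf oU; have oU' : downset_open le U := oU.
change (downset_open le (f @^-1` U)).
by move=> x y fx yx; apply: oU' fx (mf _ _ yx).
Qed.

Lemma TL_contractible : contractible (finspace le).
Proof.
exists x0, Hf; split; last split.
- apply: continuous_subspaceT; apply/continuousP => U oU.
  have oU' : downset_open le U := oU.
  rewrite openE => -[x t] /= HU.
  rewrite /interior /nbhs /=.
  have [d d0 Hd] := local t.
  case ht: (halfp t).
    have [j jm [_ Lj]] := @half_Lc t ht.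
    exists (topf (Lc t) @^-1` U, ball t d); first split.
    + apply: open_nbhs_nbhs; split; last by move: HU; rewrite /Hf /= ht.
      by apply: mono_open => //; apply: topf_mono; rewrite Lj.
    + exact: nbhsx_ballx.
    move=> [y t'] /= [Uy] Bt; have [_ /(_ ht)] := Hd t' Bt; move=> [->|[ht' LL]].
      by rewrite /Hf /= ht.
    rewrite /Hf /= ht'; have [le1 le2] := @topf_ge (Lc t) (ltac:(by rewrite Lj)) y.
    by case: LL => ->; [apply: oU' Uy le1 | apply: oU' Uy le2].
  exists (h (Lc t) @^-1` U, ball t d); first split.
  + apply: open_nbhs_nbhs; split; last by move: HU; rewrite /Hf /= ht.
    by apply: mono_open => //; apply: hmono; apply: Lc_le.
  + exact: nbhsx_ballx.
  move=> [y t'] /= [Uy] Bt; have [/(_ ht) [ht' LL] _] := Hd t' Bt.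
  by rewrite /Hf /= ht' LL.
- by move=> x; rewrite /Hf /= half0 Lc0 h0.
- by move=> x; rewrite /Hf /= half1 Lc1 hm.
Qed.
End TL.


Lemma Zz_seq (T : choiceType) (le : rel T) (f g : T -> T) :
  clos_refl_trans_1n _ (cmpf le) f g ->
  exists m (h : nat -> T -> T), [/\ h 0%N = f, h m = g &
    forall i, (i < m)%N -> cmpf le (h i) (h i.+1)].
Proof.
elim=> [x|x y z cxy _ [m [h [h0 hm hc]]]]; first by exists 0%N, (fun _ => x).
exists m.+1, (fun i => if i is i'.+1 then h i' else x); split => //.
by case=> [_|i /= im]; [rewrite h0 | apply: hc].
Qed.

Lemma Zz_contractible (T : choiceType) (le : rel T) (x0 : T) :
  (forall x, le x x) -> clos_refl_trans _ (cmpf le) id (fun _ => x0) ->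
  contractible (finspace le).
Proof.
move=> lr H; have [m [h [h0 hm hc]]] := Zz_seq (@clos_rt_rt1n _ _ _ _ H).
apply: (@TL_contractible T le lr x0 m h) => //.
- by move=> x; rewrite h0.
- by move=> x; rewrite hm.
Qed.

End TopoM.
Import TopoM.

Module FrameM.
Set Implicit Arguments.
Unset Strict Implicit.
Unset Printing Implicit Defensive.

Section Frame.
Local Open Scope group_scope.
Variables (gT : finGroupType) (G : {group gT}) (X : {set {set gT}}).
Hypothesis Xstab : forall A g, A \in X -> g \in G -> A :^ g \in X.
Local Notation chT := {set {set gT}}.
Local Notation OP := (orbit_pt G X).

Lemma conj_chain1 (c : chT) : conj_chain c 1 = c.
Proof. by rewrite /conj_chain (eq_imset (g := id)) ?imset_id // => A; rewrite conjsg1. Qed.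

Lemma conj_chainM (c : chT) g h : conj_chain (conj_chain c g) h = conj_chain c (g * h).
Proof. by rewrite /conj_chain -imset_comp; apply: eq_imset => A /=; rewrite conjsgM. Qed.

Lemma conj_chainS (c d : chT) g : c \subset d -> conj_chain c g \subset conj_chain d g.
Proof. exact: imsetS. Qed.

Lemma chains_conj c g : c \in chains X -> g \in G -> conj_chain c g \in chains X.
Proof.
rewrite !inE => /and3P[c0 cX /forall_inP cc] gG; apply/and3P; split.
- by rewrite imset_eq0.
- by apply/subsetP => _ /imsetP[A Ac ->]; apply: Xstab => //; apply: (subsetP cX).
- apply/forall_inP => _ /imsetP[A Ac ->]; apply/forall_inP => _ /imsetP[B Bc ->].
  by rewrite !conjSg; move/forall_inP: (cc A Ac); apply.
Qed.

Lemma orbit_conj c g : g \in G -> chain_orbit G (conj_chain c g) = chain_orbit G c.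
Proof.
move=> gG; apply/setP => d; apply/imsetP/imsetP => -[h hG ->].
  by exists (g * h); rewrite ?groupM // conj_chainM.
by exists (g^-1 * h); rewrite ?groupM ?groupV // conj_chainM mulgA mulgV mul1g.
Qed.

Lemma mem_orbit c : c \in chain_orbit G c.
Proof. by apply/imsetP; exists 1; rewrite ?group1 ?conj_chain1. Qed.

Lemma orbit_mem c d : d \in chain_orbit G c -> exists2 g, g \in G & d = conj_chain c g.
Proof. by case/imsetP => g gG ->; exists g. Qed.

Definition orep (O : OP) : chT :=
  odflt set0 [pick c in chains X | chain_orbit G c == val O].

Lemma repP (O : OP) : orep O \in chains X /\ chain_orbit G (orep O) = val O.
Proof.
rewrite /orep; case: pickP => [c /andP[cX /eqP E] | H] //=.
case/imsetP: (valP O) => c cX E; move: (H c); rewrite cX E eqxx //.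
Qed.

Lemma orbit_le_refl : reflexive (@orbit_le _ G X).
Proof.
move=> O; apply/existsP; exists (orep O); case: (repP O) => _ <-.
by rewrite mem_orbit; apply/existsP; exists (orep O); rewrite mem_orbit subxx.
Qed.

Definition cmap (Phi : chT -> chT) :=
  [/\ forall c, c \in chains X -> Phi c \in chains X,
      forall c d, c \in chains X -> d \in chains X -> c \subset d -> Phi c \subset Phi d &
      forall c g, c \in chains X -> g \in G -> Phi (conj_chain c g) = conj_chain (Phi c) g].

Definition orbmap (Phi : chT -> chT) (O : OP) : OP :=
  insubd O (chain_orbit G (Phi (orep O))).

Lemma omap_val Phi O : cmap Phi -> val (orbmap Phi O) = chain_orbit G (Phi (orep O)).
Proof.
case=> ch _ _; rewrite val_insubd; case: (repP O) => rc _.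
by rewrite /orbits imset_f // ch.
Qed.

Lemma orbit_leP (O D : OP) : orbit_le O D ->
  exists2 x, x \in G & conj_chain (orep O) x \subset orep D.
Proof.
case/exists_inP => c cO /exists_inP[d dD cd].
case: (repP O) (repP D) => rO EO [rD ED].
rewrite -EO in cO; rewrite -ED in dD.
case/orbit_mem: cO => g gG ->{c} in cd; case/orbit_mem: dD => h hG ->{d} in cd.
exists (g * h^-1); first by rewrite groupM ?groupV.
by rewrite -conj_chainM -[orep D](conj_chain1) -(mulgV h) -conj_chainM conj_chainS.
Qed.

Lemma omap_mono Phi : cmap Phi -> monof (@orbit_le _ G X) (orbmap Phi).
Proof.
move=> cP O D /orbit_leP[x xG sub]; have [ch mo eq] := cP.
case: (repP O) (repP D) => rO _ [rD _].
apply/exists_inP; exists (conj_chain (Phi (orep O)) x).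
  by rewrite omap_val //; apply/imsetP; exists x.
apply/exists_inP; exists (Phi (orep D)); first by rewrite omap_val // mem_orbit.
by rewrite -eq // mo // chains_conj.
Qed.

Lemma omap_cmp Phi Psi : cmap Phi -> cmap Psi ->
  (forall c, c \in chains X -> Phi c \subset Psi c) ->
  cmpf (@orbit_le _ G X) (orbmap Phi) (orbmap Psi).
Proof.
move=> cP cQ sub; split; [exact: omap_mono | split; first exact: omap_mono].
left=> O; apply/exists_inP; exists (Phi (orep O)); first by rewrite omap_val // mem_orbit.
apply/exists_inP; exists (Psi (orep O)); first by rewrite omap_val // mem_orbit.
by apply: sub; case: (repP O).
Qed.

Lemma omap_id : orbmap id = id.
Proof.
apply: boolp.funext => O; apply: val_inj; rewrite val_insubd.
by case: (repP O) => rc ->; rewrite (valP O).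
Qed.

Lemma omap_ext Phi Psi : (forall c, c \in chains X -> Phi c = Psi c) -> orbmap Phi = orbmap Psi.
Proof.
move=> E; apply: boolp.funext => O; rewrite /orbmap E //; by case: (repP O).
Qed.


Lemma cmpf_sym (T : choiceType) (le : rel T) f g : cmpf le f g -> cmpf le g f.
Proof. by case=> mf [mg [H|H]]; split=> //; split=> //; [right|left]. Qed.

Lemma crt_sym (T : choiceType) (le : rel T) f g :
  clos_refl_trans _ (cmpf le) f g -> clos_refl_trans _ (cmpf le) g f.
Proof.
elim=> [x y /cmpf_sym H|x|x y z _ H1 _ H2]; first exact: rt_step.
  exact: rt_refl.
exact: rt_trans H2 H1.
Qed.

Definition emap (f : {set gT} -> {set gT}) :=
  [/\ forall A, A \in X -> f A \in X,
      forall A B, A \in X -> B \in X -> A \subset B -> f A \subset f B &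
      forall A g, A \in X -> g \in G -> f (A :^ g) = f A :^ g].

Lemma chainP c : c \in chains X ->
  [/\ c != set0, c \subset X & forall A B, A \in c -> B \in c -> (A \subset B) || (B \subset A)].
Proof.
rewrite inE => /and3P[c0 cX /forall_inP cc]; split=> // A B Ac Bc.
by move/forall_inP: (cc A Ac); apply.
Qed.

Lemma chainI c : c != set0 -> c \subset X ->
  (forall A B, A \in c -> B \in c -> (A \subset B) || (B \subset A)) -> c \in chains X.
Proof.
move=> c0 cX cc; rewrite inE c0 cX /=; apply/forall_inP => A Ac; apply/forall_inP => B Bc.
exact: cc.
Qed.

Section Thresh.
Variables (lo hi : {set gT} -> {set gT}).
Hypotheses (elo : emap lo) (ehi : emap hi).
Hypothesis lohi : forall A, A \in X -> lo A \subset hi A.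

Definition Gth (P Q : pred nat) (c : chT) : chT :=
  lo @: [set A in c | P #|A|] :|: hi @: [set A in c | Q #|A|].

Variables (P Q : pred nat).
Hypothesis PQ : forall k, P k || Q k.
Hypothesis PQle : forall k l, P k -> Q l -> k <= l.

Lemma lo_hi_cmp A B : A \in X -> B \in X -> (A \subset B) || (B \subset A) ->
  P #|A| -> Q #|B| -> lo A \subset hi B.
Proof.
have [loX lom _] := elo; have [hiX him _] := ehi.
move=> AX BX /orP[AB|BA] PA QB.
  exact: subset_trans (lom _ _ AX BX AB) (lohi BX).
have eAB : A = B.
  apply/eqP; rewrite eq_sym eqEcard BA /=.
  exact: PQle PA QB.
by rewrite eAB lohi.
Qed.

Lemma Gth_cmap : cmap (Gth P Q).
Proof.
have [loX lom loJ] := elo; have [hiX him hiJ] := ehi.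
split.
- move=> c /chainP[c0 cX cc].
  have cXA : forall A, A \in c -> A \in X by move=> A; apply: (subsetP cX).
  apply: chainI.
  + case/set0Pn: c0 => A Ac; apply/set0Pn; case/orP: (PQ #|A|) => H.
      by exists (lo A); rewrite inE; apply/orP; left; apply: imset_f; rewrite inE Ac.
    by exists (hi A); rewrite inE; apply/orP; right; apply: imset_f; rewrite inE Ac.
  + apply/subsetP => u; rewrite inE => /orP[]/imsetP[A]; rewrite inE => /andP[Ac _] ->.
      exact: loX (cXA _ Ac).
    exact: hiX (cXA _ Ac).
  + move=> u v; rewrite !inE => /orP[]/imsetP[A]; rewrite inE => /andP[Ac PA] ->
      /orP[]/imsetP[B]; rewrite inE => /andP[Bc PB] ->.
    * by case/orP: (cc A B Ac Bc) => H; [rewrite lom ?cXA | rewrite orbC lom ?cXA].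
    * by rewrite (lo_hi_cmp (cXA _ Ac) (cXA _ Bc) (cc A B Ac Bc) PA PB).
    * by rewrite orbC (lo_hi_cmp (cXA _ Bc) (cXA _ Ac) (cc B A Bc Ac) PB PA).
    * by case/orP: (cc A B Ac Bc) => H; [rewrite him ?cXA | rewrite orbC him ?cXA].
- move=> c d _ _ cd; apply: setUSS; apply: imsetS; apply/subsetP => A; rewrite !inE;
    by case/andP => Ac ->; rewrite (subsetP cd).
- move=> c g /chainP[_ cX _] gG.
  have cXA : forall A, A \in c -> A \in X by move=> A; apply: (subsetP cX).
  rewrite /Gth /conj_chain imsetU; congr (_ :|: _); apply/setP => u;
    apply/imsetP/imsetP => -[A].
  + rewrite inE => /andP[/imsetP[B Bc ->]]; rewrite cardJg => PB ->.
    by exists (lo B); [apply: imset_f; rewrite inE Bc | rewrite loJ ?cXA].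
  + case/imsetP => B; rewrite inE => /andP[Bc PB] -> ->.
    by exists (B :^ g); [rewrite inE cardJg PB andbT; apply: imset_f | rewrite loJ ?cXA].
  + rewrite inE => /andP[/imsetP[B Bc ->]]; rewrite cardJg => PB ->.
    by exists (hi B); [apply: imset_f; rewrite inE Bc | rewrite hiJ ?cXA].
  + case/imsetP => B; rewrite inE => /andP[Bc PB] -> ->.
    by exists (B :^ g); [rewrite inE cardJg PB andbT; apply: imset_f | rewrite hiJ ?cXA].
Qed.

End Thresh.


Local Notation crt := (clos_refl_trans _ (cmpf (@orbit_le _ G X))).

Lemma zig (lo hi : {set gT} -> {set gT}) : emap lo -> emap hi ->
  (forall A, A \in X -> lo A \subset hi A) ->
  crt (orbmap (fun c => lo @: c)) (orbmap (fun c => hi @: c)).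
Proof.
move=> elo ehi lohi.
pose H n := Gth lo hi (fun k => k < n) (fun k => n <= k).
pose K n := Gth lo hi (fun k => k <= n) (fun k => n <= k).
have cH n : cmap (H n).
  apply: Gth_cmap => // [k|k l]; first by rewrite leqNgt orNb.
  by move=> kn nl; apply: ltnW (leq_trans kn nl).
have cK n : cmap (K n).
  apply: Gth_cmap => // [k|k l]; first by rewrite leq_total.
  by move=> kn nl; apply: leq_trans kn nl.
have sub1 n c : H n.+1 c \subset K n c.
  apply: setUSS; apply: imsetS; apply/subsetP => A; rewrite !inE;
    by case/andP=> -> //=; first [exact: id | exact: ltnW].
have sub2 n c : H n c \subset K n c.
  apply: setUSS; apply: imsetS; apply/subsetP => A; rewrite !inE;
    by case/andP=> -> //=; first [exact: id | exact: ltnW].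
have step n : crt (orbmap (H n.+1)) (orbmap (H n)).
  apply: rt_trans (rt_step _ _ _ _ (omap_cmp (cH _) (cK n) (fun c _ => sub1 n c))) _.
  exact: rt_step _ _ _ _ (cmpf_sym (omap_cmp (cH _) (cK n) (fun c _ => sub2 n c))).
have all n : crt (orbmap (H n)) (orbmap (H 0)).
  elim: n => [|n IH]; [exact: rt_refl | exact: rt_trans (step n) IH].
have -> : orbmap (fun c => lo @: c) = orbmap (H #|gT|.+1).
  apply: omap_ext => c _; rewrite /H /Gth.
  have -> : [set A in c | #|gT|.+1 <= #|A|] = set0.
    by apply/setP => A; rewrite !inE ltnNge max_card andbF.
  rewrite imset0 setU0; suff -> : [set A in c | #|A| < #|gT|.+1] = c by [].
  by apply/setP => A; rewrite !inE ltnS max_card andbT.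
have -> : orbmap (fun c => hi @: c) = orbmap (H 0).
  apply: omap_ext => c _; rewrite /H /Gth.
  have -> : [set A in c | #|A| < 0] = set0 by apply/setP => A; rewrite !inE andbF.
  rewrite imset0 set0U; suff -> : [set A in c | 0 <= #|A|] = c by [].
  by apply/setP => A; rewrite !inE andbT.
exact: all.
Qed.

Lemma omap_imset_id : orbmap (fun c => id @: c) = id.
Proof. by rewrite -omap_id; apply: omap_ext => c _; rewrite imset_id. Qed.

Lemma omap_const (f : {set gT} -> {set gT}) (N : {set gT}) (HN : [set N] \in chains X) :
  (forall A, A \in X -> exists2 g, g \in G & f A = N :^ g) ->
  (forall A B, A \in X -> B \in X -> A \subset B -> f A = f B) ->
  orbmap (fun c => f @: c) = fun _ => (Sub (chain_orbit G [set N]) (imset_f _ HN) : OP).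
Proof.
move=> fN fc; apply: boolp.funext => O; apply: val_inj.
rewrite /= val_insubd; case: (repP O) => /chainP[c0 cX cc] _.
case/set0Pn: c0 => A0 A0c.
have A0X : A0 \in X by apply: (subsetP cX).
have [g gG fA0] := fN A0 A0X.
have -> : f @: orep O = [set N :^ g].
  apply/setP => u; rewrite inE; apply/imsetP/eqP => [[B Bc ->]|->].
    have BX : B \in X by apply: (subsetP cX).
    case/orP: (cc A0 B A0c Bc) => H; [rewrite -(fc _ _ A0X BX H) // | rewrite (fc _ _ BX A0X H) //].
  by exists A0.
have -> : [set N :^ g] = conj_chain [set N] g by rewrite /conj_chain imset_set1.
by rewrite orbit_conj // /orbits imset_f.
Qed.


Lemma emap_id : emap id.
Proof. by split. Qed.

Lemma contract4 (f1 f2 f3 f4 : {set gT} -> {set gT}) (N : {set gT}) :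
  N \in X -> emap f1 -> emap f2 -> emap f3 -> emap f4 ->
  (forall A, A \in X -> [/\ A \subset f1 A, f2 A \subset f1 A, f2 A \subset f3 A & f4 A \subset f3 A]) ->
  (forall A, A \in X -> exists2 g, g \in G & f4 A = N :^ g) ->
  (forall A B, A \in X -> B \in X -> A \subset B -> f4 A = f4 B) ->
  contractible (orbit_space G X).
Proof.
move=> NX e1 e2 e3 e4 sub fN fc.
have HN : [set N] \in chains X.
  apply: chainI; first by apply/set0Pn; exists N; rewrite inE.
    by apply/subsetP => u; rewrite inE => /eqP ->.
  by move=> A B; rewrite !inE => /eqP-> /eqP->; rewrite subxx.
apply: (@Zz_contractible _ _ (Sub (chain_orbit G [set N]) (imset_f _ HN) : OP)).
  exact: orbit_le_refl.
have s1 : forall A, A \in X -> id A \subset f1 A by move=> A /sub[].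
have s2 : forall A, A \in X -> f2 A \subset f1 A by move=> A /sub[].
have s3 : forall A, A \in X -> f2 A \subset f3 A by move=> A /sub[].
have s4 : forall A, A \in X -> f4 A \subset f3 A by move=> A /sub[].
rewrite -(omap_const HN fN fc) -omap_imset_id.
apply: rt_trans (zig emap_id e1 s1) _.
apply: rt_trans (crt_sym (zig e2 e1 s2)) _.
apply: rt_trans (zig e2 e3 s3) _.
exact: crt_sym (zig e4 e3 s4).
Qed.

End Frame.

End FrameM.
Import FrameM.

Module GrpM.
Set Implicit Arguments.
Unset Strict Implicit.
Unset Printing Implicit Defensive.

Section TI.
Variables (gT : finGroupType) (G : {group gT}) (p q a : nat).
Hypotheses (pp : prime p) (pq : prime q) (oG : #|G| = (p ^ a * q)%N).
Local Open Scope group_scope.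

Lemma prime_dvd_pq r : prime r -> r %| #|G| -> r = p \/ r = q.
Proof.
move=> pr; rewrite oG Euclid_dvdM // Euclid_dvdX // !dvdn_prime2 //.
by case/orP => [/andP[/eqP -> _]|/eqP ->]; [left|right].
Qed.

Lemma solG : solvable G.
Proof.
apply: Burnside_p_a_q_b.
have -> : (2 = size [:: p; q])%N by [].
apply: uniq_leq_size; first exact: primes_uniq.
move=> r; rewrite mem_primes => /and3P[pr _ rd].
by case: (prime_dvd_pq pr rd) => ->; rewrite !inE eqxx ?orbT.
Qed.

Lemma TI (P1 P2 : {group gT}) : p.-Sylow(G) P1 -> p.-Sylow(G) P2 ->
  P1 :&: P2 \subset 'O_p(G) \/ P1 :=: P2.
Proof.
move=> sylP1 sylP2.
set D := 'O_p(G).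
have nsDG : D <| G := pcore_normal _ _.
have [sDG nDG] := andP nsDG.
have sDP1 : D \subset P1 := pcore_sub_Hall sylP1.
have sDP2 : D \subset P2 := pcore_sub_Hall sylP2.
have sP1G := pHall_sub sylP1; have sP2G := pHall_sub sylP2.
have nDP1 : P1 \subset 'N(D) := subset_trans sP1G nDG.
have nDP2 : P2 \subset 'N(D) := subset_trans sP2G nDG.
have [trG | ntG] := eqVneq (G / D) 1.
  right; have sGD : G \subset D by rewrite -(quotient_sub1 nDG) trG.
  apply/eqP; rewrite eqEsubset.
  by rewrite (subset_trans sP1G (subset_trans sGD sDP2)) (subset_trans sP2G (subset_trans sGD sDP1)).
have [M minM sMGb] := minnormal_exists ntG (normG (G / D)).
have [nMGb ntM abM] := minnormal_solvable minM sMGb (quotient_sol D solG).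
set r := pdiv #|M|.
have r_pr : prime r by apply: pdiv_prime; rewrite cardG_gt1.
have rM : r.-group M := abelem_pgroup abM.
have dMG : #|M| %| #|G|.
  apply: dvdn_trans (cardSg sMGb) _; rewrite card_quotient //; exact: dvdn_indexg.
have r_dvd : r %| #|G| := dvdn_trans (pdiv_dvd _) dMG.
have rnp : r != p.
  apply/eqP => rp; move: ntM; rewrite rp in rM.
  have nsM : M <| G / D by rewrite /normal sMGb.
  have := pcore_max rM nsM; rewrite trivg_pcore_quotient subG1 => /eqP ->.
  by rewrite eqxx.
have rq : r = q by case: (prime_dvd_pq r_pr r_dvd) => // rp; rewrite rp eqxx in rnp.
have qnp : q != p by rewrite -rq.
have cop_qp : coprime q p by rewrite prime_coprime // dvdn_prime2 // eq_sym.
have cardM : #|M| = q.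
  have cMp : coprime #|M| (p ^ a).
    by rewrite (card_pgroup rM) rq coprimeXl // coprimeXr.
  have : #|M| %| q by rewrite -(Gauss_dvdr _ cMp) -oG.
  case/primeP: pq => _ /[apply] /orP[/eqP M1|/eqP //].
  by move: ntM; rewrite -cardG_gt1 M1.
set P1b := P1 / D; set P2b := P2 / D.
have sylP1b : p.-Sylow(G / D) P1b := quotient_pHall nDP1 sylP1.
have sylP2b : p.-Sylow(G / D) P2b := quotient_pHall nDP2 sylP2.
have sP1bG : P1b \subset G / D := pHall_sub sylP1b.
have pP1b : p.-group P1b := pHall_pgroup sylP1b.
have TIPM : P1b :&: M = 1.
  apply: coprime_TIg; rewrite cardM (pnat_coprime pP1b) //.
  by rewrite p'natE // dvdn_prime2 // eq_sym.
have GbE : G / D = P1b * M.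
  apply/eqP; rewrite eq_sym eqEcard mul_subG //= TI_cardMg // cardM.
  rewrite -(Lagrange sP1bG) leq_mul2l; apply/orP; right.
  set idx := #|G / D : P1b|.
  have /and3P[_ _ p'idx] := sylP1b.
  have qd : q %| #|P1b| * idx.
    by rewrite (Lagrange sP1bG) -cardM cardSg.
  have cqP : coprime q #|P1b|.
    by rewrite coprime_sym (pnat_coprime pP1b) // p'natE // dvdn_prime2 // eq_sym.
  have idG : idx %| #|G|.
    apply: dvdn_trans (dvdn_indexg _ _) _; rewrite card_quotient //; exact: dvdn_indexg.
  have cip : coprime idx (p ^ a).
    by rewrite coprimeXr // (p'nat_coprime p'idx) // pnat_id.
  rewrite oG Gauss_dvdr // in idG; apply: dvdn_leq idG; exact: prime_gt0.
have [x xG P2E] := Sylow_trans sylP1b sylP2b.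
have xG' : x \in P1b * M by rewrite -GbE.
case/mulsgP: xG' => u m uP1 mM xE.
have P2E' : P2b :=: P1b :^ m by rewrite /P2b /P1b; have := P2E; rewrite /= => ->; rewrite xE conjsgM (conjGid uP1).
have [m1 | ntm] := eqVneq m 1.
  right; move: P2E'; rewrite m1 conjsg1 => E.
  apply/eqP; rewrite eqEsubset -(quotientSGK nDP1 sDP2) -(quotientSGK nDP2 sDP1).
  by rewrite -/P1b -/P2b E !subxx.
have MmE : M :=: <[m]>.
  apply/eqP; rewrite eq_sym eqEcard cycle_subG mM /= cardM -orderE.
  have : #[m] %| q by rewrite -cardM order_dvdG.
  case/primeP: pq => _ /[apply] /orP[/eqP o1|/eqP -> //].
  by move: ntm; rewrite -order_eq1 o1 eqxx.
have sub : P1b :&: P2b \subset 'C_P1b(M).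
  apply/subsetP => y; rewrite inE => /andP[yP1 yP2].
  rewrite P2E' mem_conjg in yP2; set z := y ^ m^-1 in yP2.
  have yE : y = z ^ m by rewrite /z conjgKV.
  have mN : m \in 'N(M) by rewrite (subsetP nMGb) // (subsetP sMGb).
  have cP : [~ z, m] \in P1b by rewrite commgEl groupM ?groupV // -yE.
  have zG : z \in 'N(M) by apply: (subsetP nMGb); apply: (subsetP sP1bG).
  have cM : [~ z, m] \in M by rewrite commgEr groupM ?groupV // memJ_norm ?groupV.
  have : [~ z, m] \in P1b :&: M by rewrite inE cP.
  rewrite TIPM inE => c1; have cz := commgP c1.
  have yz : y = z by rewrite {1}yE; apply/conjg_fixP.
  rewrite inE yP1 MmE cent_cycle; apply/cent1P; rewrite yz; exact: cz.
have nC : 'C_P1b(M) <| G / D.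
  rewrite /normal subIset ?sP1bG //= GbE mul_subG //.
    by rewrite normsI ?normG // norms_cent // (subset_trans sP1bG nMGb).
  by rewrite cents_norm // centsC subsetIr.
have := pcore_max (pgroupS (subsetIl _ _) pP1b) nC.
rewrite trivg_pcore_quotient => C1.
left; rewrite -quotient_sub1; last by rewrite subIset ?nDP1.
apply: subset_trans (quotientI _ _ _) _; exact: subset_trans sub C1.
Qed.
End TI.

End GrpM.
Import GrpM.

Module CasesM.
Set Implicit Arguments.
Unset Strict Implicit.
Unset Printing Implicit Defensive.

Section Basic.
Variables (gT : finGroupType) (G : {group gT}) (p : nat).
Local Open Scope group_scope.

Lemma centerJ' (P : {set gT}) g : 'Z(P :^ g) = 'Z(P) :^ g.
Proof. by rewrite /center centJ conjIg. Qed.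

Lemma SpP (A : {set gT}) : reflect (exists H : {group gT}, [/\ A = H, H \subset G, p.-group H & H != 1 :> {set gT}])
  (A \in Sp p G).
Proof.
rewrite inE; apply: (iffP and4P) => [[gA sAG pA ntA]|[H [-> sHG pH ntH]]].
  by exists (Group gA).
by split=> //; apply: groupP.
Qed.

Lemma SpI (H : {group gT}) : H \subset G -> p.-group H -> H != 1 :> {set gT} -> (H : {set gT}) \in Sp p G.
Proof. by move=> *; apply/SpP; exists H. Qed.

Lemma ApP (A : {set gT}) : A \in Ap p G = (A \in Sp p G) && p.-abelem A.
Proof. by rewrite inE. Qed.

Lemma BpP (A : {set gT}) : A \in Bp p G = (A \in Sp p G) && (A == 'O_p('N_G(A))).
Proof. by rewrite inE. Qed.

Lemma Sp_conj (A : {set gT}) g : A \in Sp p G -> g \in G -> A :^ g \in Sp p G.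
Proof.
case/SpP => H [-> sHG pH ntH] gG; apply/SpP; exists (H :^ g)%G; split=> //=.
- by rewrite -(conjGid gG) conjSg.
- by rewrite pgroupJ.
- by rewrite conjsg_eq1.
Qed.

Lemma Ap_conj (A : {set gT}) g : A \in Ap p G -> g \in G -> A :^ g \in Ap p G.
Proof.
rewrite !ApP => /andP[sA aA] gG; rewrite Sp_conj //=.
by case/SpP: sA aA => H [-> _ _ _]; rewrite abelemJ.
Qed.

Lemma Bp_conj (A : {set gT}) g : A \in Bp p G -> g \in G -> A :^ g \in Bp p G.
Proof.
rewrite !BpP => /andP[sA /eqP eA] gG; rewrite Sp_conj //=.
case/SpP: sA eA => H [-> _ _ _] eA.
have -> : 'N_G(H :^ g) = 'N_G(H) :^ g by rewrite normJ conjIg conjGid.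
by rewrite pcoreJ -eA (inj_eq (@conjsg_inj _ g)).
Qed.

End Basic.

Section Syl.
Variables (gT : finGroupType) (G : {group gT}) (p q a : nat).
Hypotheses (pp : prime p) (pq : prime q) (oG : #|G| = (p ^ a * q)%N).
Local Open Scope group_scope.
Local Notation D := 'O_p(G).

Definition Psyl (A : {set gT}) : {group gT} :=
  odflt 1%G [pick P : {group gT} | p.-Sylow(G) P && (A \subset P)].

Lemma PsylP (H : {group gT}) : H \subset G -> p.-group H ->
  p.-Sylow(G) (Psyl H) /\ H \subset Psyl H.
Proof.
move=> sHG pH; rewrite /Psyl; case: pickP => [P /andP[] //|none].
have [P sylP sHP] := Sylow_superset sHG pH.
by move: (none P); rewrite sylP sHP.
Qed.

Lemma Psyl_uniq (H P : {group gT}) : ~~ (H \subset D) -> H \subset G -> p.-group H ->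
  p.-Sylow(G) P -> H \subset P -> (P : {set gT}) = Psyl H.
Proof.
move=> nHD sHG pH sylP sHP; have [sylQ sHQ] := PsylP sHG pH.
case: (TI pp pq oG sylP sylQ) => // sub.
by case/negP: nHD; apply: subset_trans sub; rewrite subsetI sHP.
Qed.

Lemma notD_conj (A : {set gT}) g : g \in G -> (A :^ g \subset D) = (A \subset D).
Proof.
move=> gG; rewrite sub_conjg.
suff -> : D :^ g^-1 = D by [].
by apply/normP; rewrite (subsetP (normal_norm (pcore_normal p G))) ?groupV.
Qed.

Lemma Psyl_conj (H : {group gT}) g : ~~ (H \subset D) -> H \subset G -> p.-group H ->
  g \in G -> (Psyl (H :^ g) : {set gT}) = Psyl H :^ g.
Proof.
move=> nHD sHG pH gG; have [sylQ sHQ] := PsylP sHG pH.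
symmetry; rewrite -[_ :^ g]/(gval (Psyl H :^ g)%G).
apply: (@Psyl_uniq (H :^ g)%G); rewrite /= ?notD_conj ?pgroupJ ?conjSg ?pHallJ //.
by rewrite -(conjGid gG) conjSg.
Qed.

Lemma Psyl_mono (H K : {group gT}) : ~~ (H \subset D) -> H \subset K -> K \subset G ->
  p.-group K -> (Psyl H : {set gT}) = Psyl K.
Proof.
move=> nHD sHK sKG pK; have [sylQ sKQ] := PsylP sKG pK.
have sHG := subset_trans sHK sKG.
by symmetry; apply: Psyl_uniq => //; [exact: pgroupS pK | exact: subset_trans sKQ].
Qed.

Lemma Sylow_radical (P : {group gT}) : p.-Sylow(G) P -> 'O_p('N_G(P)) = P.
Proof.
move=> sylP; have sPG := pHall_sub sylP; have nsP := normalSG sPG.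
apply/eqP; rewrite eqEsubset pcore_max ?(pHall_pgroup sylP) // andbT.
apply: pcore_sub_Hall; apply: pHall_subl sylP; first exact: normal_sub nsP.
exact: subsetIl.
Qed.

End Syl.

Section CaseD.
Variables (gT : finGroupType) (G : {group gT}) (p : nat).
Hypothesis pp : prime p.
Local Open Scope group_scope.
Local Notation D := 'O_p(G).

Lemma nDG : G \subset 'N(D).
Proof. exact: normal_norm (pcore_normal p G). Qed.

Lemma DJ g : g \in G -> D :^ g = D.
Proof. by move=> gG; apply/normP; rewrite (subsetP nDG). Qed.

Lemma emap_const (X : {set {set gT}}) N : N \in X -> (forall g, g \in G -> N :^ g = N) ->
  emap G X (fun _ => N).
Proof. by move=> NX NJ; split=> // A g _ gG; rewrite NJ. Qed.

Lemma Sp_contr_D : D != 1 -> contractible (orbit_space G (Sp p G)).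
Proof.
move=> ntD.
have DX : (D : {set gT}) \in Sp p G := SpI (pcore_sub _ _) (pcore_pgroup _ _) ntD.
have eD := emap_const DX DJ.
apply: (@contract4 _ G _ (@Sp_conj _ G p) (fun A => A * D) (fun _ => D) (fun _ => D) (fun _ => D) D DX) => //.
- split.
  + move=> A /SpP[H [-> sHG pH ntH]].
    have nDH : H \subset 'N(D) := subset_trans sHG nDG.
    apply/SpP; exists (H <*> D)%G; split => /=.
    * by rewrite norm_joinEl.
    * by rewrite join_subG sHG pcore_sub.
    * by rewrite norm_joinEl // pgroupM pH pcore_pgroup.
    * by apply: contra ntH => /eqP E; rewrite -subG1 -E joing_subl.
  + by move=> A B _ _ AB; apply: mulSg.
  + by move=> A g _ gG; rewrite conjsMg DJ.
- move=> A /SpP[H [-> _ _ _]]; split; rewrite ?subxx //.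
    by rewrite mulg_subl.
  by rewrite mulg_subr.
- by move=> A _; exists 1; rewrite ?group1 ?conjsg1.
Qed.

Lemma O_sub_radical (H : {group gT}) : H \subset G -> H :=: 'O_p('N_G(H)) -> D \subset H.
Proof.
move=> sHG eH.
have pH : p.-group H by rewrite eH pcore_pgroup.
have sDNH : 'N_G(H) :&: D \subset H.
  rewrite {2}eH; apply: pcore_max.
    by apply: pgroupS (pcore_pgroup p G); apply: subsetIr.
  by apply: normalGI; [apply: subsetIl | apply: pcore_normal].
apply/negPn/negP => nDH.
have nDH' : H \subset 'N(D) := subset_trans sHG nDG.
set K := (H <*> D)%G.
have pK : p.-group K by rewrite /= norm_joinEl // pgroupM pH pcore_pgroup.
have prHK : H \proper K.
  rewrite properEneq joing_subl andbT; apply: contra nDH => /eqP E.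
  by rewrite E joing_subr.
have := nilpotent_proper_norm (pgroup_nil pK) prHK.
rewrite properEneq => /andP[/eqP[]]; apply/eqP; rewrite eqEsubset subsetI.
apply/andP; split; first by rewrite (proper_sub prHK) normG.
apply/subsetP => x; rewrite inE => /andP[]; rewrite /= norm_joinEl // => /mulsgP[h d hH dD ->] xN.
rewrite groupMl //; apply: (subsetP sDNH); rewrite in_setI dD andbT in_setI (subsetP (pcore_sub p G)) //=.
by move: xN; rewrite groupMl // (subsetP (normG H)).
Qed.

Lemma Bp_contr_D : D != 1 -> contractible (orbit_space G (Bp p G)).
Proof.
move=> ntD.
have DX : (D : {set gT}) \in Bp p G.
  rewrite BpP SpI ?pcore_sub ?pcore_pgroup //=.
  by rewrite (setIidPl nDG).
have eD := emap_const DX DJ.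
apply: (@contract4 _ G _ (@Bp_conj _ G p) id id id (fun _ => D) D DX) => //.
- move=> A AX; split; rewrite ?subxx //=.
  move: AX; rewrite BpP => /andP[/SpP[H [-> sHG _ _]] /eqP eH].
  exact: O_sub_radical.
- by move=> A _; exists 1; rewrite ?group1 ?conjsg1.
Qed.

End CaseD.

Section CaseSyl.
Variables (gT : finGroupType) (G : {group gT}) (p q a : nat).
Hypotheses (pp : prime p) (pq : prime q) (oG : #|G| = (p ^ a * q)%N).
Local Open Scope group_scope.
Local Notation D := 'O_p(G).
Local Notation Psyl := (Psyl G p).

Lemma Sylow_nt (P : {group gT}) : p %| #|G| -> p.-Sylow(G) P -> P != 1 :> {set gT}.
Proof.
move=> pG sylP; rewrite -cardG_gt1 (card_Hall sylP) p_part_gt1 mem_primes pp cardG_gt0 //.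
Qed.

Lemma Sylow_Sp (P : {group gT}) : p %| #|G| -> p.-Sylow(G) P -> (P : {set gT}) \in Sp p G.
Proof.
move=> pG sylP; apply: SpI; [exact: pHall_sub sylP | exact: pHall_pgroup sylP | exact: Sylow_nt].
Qed.

Lemma Syl_contr (X : {set {set gT}}) :
  (forall A g, A \in X -> g \in G -> A :^ g \in X) ->
  (forall A, A \in X -> A \in Sp p G) ->
  (forall P : {group gT}, p.-Sylow(G) P -> (P : {set gT}) \in X) ->
  D = 1 -> p %| #|G| -> contractible (orbit_space G X).
Proof.
move=> Xstab XS SX D1 pG.
have [P0 sylP0] := Sylow_exists p G.
have nD : forall H : {group gT}, H != 1 :> {set gT} -> ~~ (H \subset D).
  by move=> H ntH; rewrite D1 subG1.
have eP : emap G X (fun A => (Psyl A : {set gT})).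
  split.
  - move=> A /[dup] AX /XS/SpP[H [-> sHG pH ntH]].
    by have [sylQ _] := PsylP sHG pH; apply: SX.
  - move=> A B /XS/SpP[H [-> sHG pH ntH]] /XS/SpP[K [-> sKG pK ntK]] sHK.
    by rewrite (Psyl_mono pp pq oG (nD _ ntH) sHK sKG pK) subxx.
  - move=> A g /XS/SpP[H [-> sHG pH ntH]] gG.
    by rewrite (Psyl_conj pp pq oG (nD _ ntH) sHG pH gG).
apply: (@contract4 _ G _ Xstab _ _ _ _ P0 (SX _ sylP0) eP eP eP eP).
- move=> A /XS/SpP[H [-> sHG pH ntH]]; rewrite subxx; split => //.
  by case: (PsylP sHG pH).
- move=> A /XS/SpP[H [-> sHG pH ntH]]; have [sylQ _] := PsylP sHG pH.
  by have [x xG ->] := Sylow_trans sylP0 sylQ; exists x.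
- move=> A B /XS/SpP[H [-> sHG pH ntH]] /XS/SpP[K [-> sKG pK ntK]] sHK.
  by rewrite (Psyl_mono pp pq oG (nD _ ntH) sHK sKG pK).
Qed.

End CaseSyl.

Section Abelem.
Variables (gT : finGroupType) (p : nat).
Hypothesis pp : prime p.
Local Open Scope group_scope.

Lemma abelem_join (H K : {group gT}) : p.-abelem H -> p.-abelem K -> H \subset 'C(K) ->
  p.-abelem (H <*> K).
Proof.
move=> aH aK cHK; have nKH := cents_norm cHK.
have [abH eH] := abelemP pp aH; have [abK eK] := abelemP pp aK.
apply/abelemP => //; split.
  by rewrite /= norm_joinEl // abelianM abH abK centsC.
move=> x; rewrite /= norm_joinEl // => /mulsgP[h k hH kK ->].
have chk : commute h k by apply/centP: kK; apply: (subsetP cHK).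
by rewrite expgMn // eH // eK // mulg1.
Qed.

Lemma Zs_props (P : {group gT}) : p.-group P ->
  [/\ 'Ohm_1('Z(P)) \subset P, p.-abelem 'Ohm_1('Z(P)),
      P \subset 'C('Ohm_1('Z(P))) & (P != 1 :> {set gT}) -> 'Ohm_1('Z(P)) != 1 :> {set gT}].
Proof.
move=> pP; split.
- exact: subset_trans (Ohm_sub 1 _) (center_sub P).
- exact: Ohm1_abelem (pgroupS (center_sub P) pP) (center_abelian P).
- rewrite centsC; apply: subset_trans (Ohm_sub 1 _) _; rewrite centsC.
  by rewrite /center centsC subsetIr.
- by rewrite Ohm1_eq1 center_nil_eq1 // (pgroup_nil pP).
Qed.

End Abelem.

Section CaseAp.
Variables (gT : finGroupType) (G : {group gT}) (p q a : nat).
Hypotheses (pp : prime p) (pq : prime q) (oG : #|G| = (p ^ a * q)%N).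
Local Open Scope group_scope.
Local Notation D := 'O_p(G).
Local Notation Psyl := (Psyl G p).

Lemma ApI (H : {group gT}) : H \subset G -> H != 1 :> {set gT} -> p.-abelem H ->
  (H : {set gT}) \in Ap p G.
Proof. by move=> sHG ntH aH; rewrite ApP aH andbT SpI // (abelem_pgroup aH). Qed.

Lemma Ap_info (A : {set gT}) : A \in Ap p G ->
  exists H : {group gT}, [/\ A = H, H \subset G, p.-group H, H != 1 :> {set gT} & p.-abelem H].
Proof.
by rewrite ApP => /andP[/SpP[H [-> sHG pH ntH]] aH]; exists H.
Qed.

Lemma ZsJ (P : {group gT}) g : 'Ohm_1('Z(P :^ g)) = 'Ohm_1('Z(P)) :^ g.
Proof. by rewrite centerJ' OhmJ. Qed.

Lemma Zsyl_Ap (P : {group gT}) : p.-Sylow(G) P -> P != 1 :> {set gT} ->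
  ('Ohm_1('Z(P)) : {set gT}) \in Ap p G.
Proof.
move=> sylP ntP; have [sZP aZ _ ntZ] := Zs_props (pHall_pgroup sylP).
by apply: ApI; [exact: subset_trans sZP (pHall_sub sylP) | exact: ntZ | exact: aZ].
Qed.

Definition Zs (A : {set gT}) : {set gT} := 'Ohm_1('Z(Psyl A)).

Lemma Zs_info (H : {group gT}) : H \subset G -> p.-group H -> H != 1 :> {set gT} ->
  [/\ Zs H \in Ap p G, Zs H \subset Psyl H, H \subset 'C(Zs H), p.-abelem (Zs H) &
      Zs H \subset G].
Proof.
move=> sHG pH ntH; have [sylP sHP] := PsylP sHG pH.
have ntP : Psyl H != 1 :> {set gT}.
  by apply: contra ntH => /eqP E; rewrite -subG1 -E.
have [sZP aZ cPZ _] := Zs_props (pHall_pgroup sylP).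
split => //; first exact: Zsyl_Ap.
  exact: subset_trans sHP cPZ.
exact: subset_trans sZP (pHall_sub sylP).
Qed.

Lemma Zs_conj (H : {group gT}) g : ~~ (H \subset D) -> H \subset G -> p.-group H -> g \in G ->
  Zs (H :^ g) = Zs H :^ g.
Proof. by move=> nHD sHG pH gG; rewrite /Zs (Psyl_conj pp pq oG nHD sHG pH gG) ZsJ. Qed.

Lemma Zs_mono (H K : {group gT}) : ~~ (H \subset D) -> H \subset K -> K \subset G ->
  p.-group K -> Zs H = Zs K.
Proof. by move=> nHD sHK sKG pK; rewrite /Zs (Psyl_mono pp pq oG nHD sHK sKG pK). Qed.

Lemma HZs_Ap (H : {group gT}) : H \subset G -> H != 1 :> {set gT} -> p.-abelem H ->
  H * Zs H \in Ap p G /\ H * Zs H = (H <*> 'Ohm_1('Z(Psyl H)))%G.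
Proof.
move=> sHG ntH aH; have pH := abelem_pgroup aH.
have [_ _ cHZ aZ sZG] := Zs_info sHG pH ntH.
have E : H * Zs H = (H <*> 'Ohm_1('Z(Psyl H)))%G by rewrite /= norm_joinEl // cents_norm.
split=> //; rewrite E; apply: ApI.
- by rewrite join_subG sHG.
- by apply: contra ntH => /eqP F; rewrite -subG1 -F joing_subl.
- exact: abelem_join.
Qed.

Lemma Ap_contr_1 : D = 1 -> p %| #|G| -> contractible (orbit_space G (Ap p G)).
Proof.
move=> D1 pG.
have [P0 sylP0] := Sylow_exists p G.
have ntP0 := Sylow_nt pp pG sylP0.
have nD : forall H : {group gT}, H != 1 :> {set gT} -> ~~ (H \subset D).
  by move=> H ntH; rewrite D1 subG1.
have eZ : emap G (Ap p G) Zs.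
  split.
  - by move=> A /Ap_info[H [-> sHG pH ntH aH]]; case: (Zs_info sHG pH ntH).
  - move=> A B /Ap_info[H [-> sHG pH ntH aH]] /Ap_info[K [-> sKG pK ntK aK]] sHK.
    by rewrite (Zs_mono (nD _ ntH) sHK sKG pK) subxx.
  - move=> A g /Ap_info[H [-> sHG pH ntH aH]] gG.
    exact: Zs_conj (nD _ ntH) sHG pH gG.
have e1 : emap G (Ap p G) (fun A => A * Zs A).
  split.
  - by move=> A /Ap_info[H [-> sHG pH ntH aH]]; case: (HZs_Ap sHG ntH aH).
  - move=> A B /Ap_info[H [-> sHG pH ntH aH]] /Ap_info[K [-> sKG pK ntK aK]] sHK.
    by rewrite (Zs_mono (nD _ ntH) sHK sKG pK) mulSg.
  - move=> A g /Ap_info[H [-> sHG pH ntH aH]] gG.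
    by rewrite conjsMg (Zs_conj (nD _ ntH) sHG pH gG).
apply: (@contract4 _ G _ (@Ap_conj _ G p) _ _ _ _ _ (Zsyl_Ap sylP0 ntP0) e1 eZ eZ eZ).
- move=> A /Ap_info[H [-> sHG pH ntH aH]]; rewrite subxx; split => //.
    by rewrite mulg_subl.
  by rewrite mulg_subr.
- move=> A /Ap_info[H [-> sHG pH ntH aH]]; have [sylQ _] := PsylP sHG pH.
  have [x xG E] := Sylow_trans sylP0 sylQ; exists x => //.
  by rewrite /Zs E ZsJ.
- move=> A B /Ap_info[H [-> sHG pH ntH aH]] /Ap_info[K [-> sKG pK ntK aK]] sHK.
  exact: Zs_mono (nD _ ntH) sHK sKG pK.
Qed.


Local Notation ZD := ('Ohm_1('Z(D))).

Definition f1D (A : {set gT}) := if A \subset D then A else A * Zs A.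
Definition f2D (A : {set gT}) := if A \subset D then A else (A * Zs A) :&: D.
Definition f3D (A : {set gT}) := f2D A * ZD.

Lemma ZD_info : D != 1 ->
  [/\ (ZD : {set gT}) \in Ap p G, D \subset 'C(ZD) & forall g, g \in G -> ZD :^ g = ZD].
Proof.
move=> ntD; have [sZD aZ cDZ ntZ] := Zs_props (pcore_pgroup p G).
split => //.
- apply: ApI => //; last exact: ntZ.
  exact: subset_trans sZD (pcore_sub p G).
- by move=> g gG; rewrite -ZsJ (DJ p gG).
Qed.

Lemma ZsD_nt (H : {group gT}) : D != 1 -> H \subset G -> p.-group H -> H != 1 :> {set gT} ->
  Zs H :&: D != 1.
Proof.
move=> ntD sHG pH ntH; have [sylP sHP] := PsylP sHG pH.
have pP := pHall_pgroup sylP.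
have nsDP : D <| Psyl H.
  exact: normalS (pcore_sub_Hall sylP) (pHall_sub sylP) (pcore_normal p G).
have ntDZ := meet_center_nil (pgroup_nil pP) nsDP ntD.
have : 'Ohm_1((D :&: 'Z(Psyl H))%G) != 1 :> {set gT} by rewrite Ohm1_eq1.
apply: contra => /eqP E; rewrite -subG1 -E subsetI /Zs OhmS ?subsetIr //=.
exact: subset_trans (Ohm_sub 1 _) (subsetIl _ _).
Qed.

Lemma f2D_info (A : {set gT}) : D != 1 -> A \in Ap p G ->
  exists K : {group gT}, [/\ f2D A = K, K \subset D, p.-abelem K, K != 1 :> {set gT} &
    (A \subset D -> f2D A = A)].
Proof.
move=> ntD /Ap_info[H [-> sHG pH ntH aH]]; rewrite /f2D.
case: ifP => sHD; first by exists H.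
have [_ E] := HZs_Ap sHG ntH aH.
exists ((H <*> 'Ohm_1('Z(Psyl H))) :&: D)%G; split.
- by rewrite /= -E.
- exact: subsetIr.
- apply: abelemS (subsetIl _ _) _.
  by case: (HZs_Ap sHG ntH aH); rewrite E ApP => /andP[].
- rewrite /= -E; apply: contra (ZsD_nt ntD sHG pH ntH) => /eqP F; rewrite -subG1 -F setSI //.
  by rewrite mulg_subr.
- by [].
Qed.

Lemma Ap_contr_D : D != 1 -> contractible (orbit_space G (Ap p G)).
Proof.
move=> ntD; have [ZDX cDZ ZDJ] := ZD_info ntD.
have sDG := pcore_sub p G.
have e1 : emap G (Ap p G) f1D.
  split.
  - move=> A AX; rewrite /f1D; case: ifP => // _.
    by case/Ap_info: AX => H [-> sHG pH ntH aH]; case: (HZs_Ap sHG ntH aH).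
  - move=> A B /Ap_info[H [-> sHG pH ntH aH]] /Ap_info[K [-> sKG pK ntK aK]] sHK.
    rewrite /f1D; case: ifP => sHD; case: ifP => sKD //.
    + by apply: subset_trans sHK _; rewrite mulg_subl.
    + by move: sHD; rewrite (subset_trans sHK sKD).
    + by rewrite (Zs_mono (negbT sHD) sHK sKG pK) mulSg.
  - move=> A g /Ap_info[H [-> sHG pH ntH aH]] gG.
    rewrite /f1D notD_conj //; case: ifP => // sHD.
    by rewrite conjsMg (Zs_conj (negbT sHD) sHG pH gG).
have e2 : emap G (Ap p G) f2D.
  split.
  - move=> A AX; have [K [-> sKD aK ntK _]] := f2D_info ntD AX.
    by apply: ApI => //; exact: subset_trans sKD sDG.
  - move=> A B /Ap_info[H [-> sHG pH ntH aH]] /Ap_info[K [-> sKG pK ntK aK]] sHK.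
    rewrite /f2D; case: ifP => sHD; case: ifP => sKD //.
    + by rewrite subsetI sHD andbT; apply: subset_trans sHK _; rewrite mulg_subl.
    + by move: sHD; rewrite (subset_trans sHK sKD).
    + by rewrite (Zs_mono (negbT sHD) sHK sKG pK) setSI // mulSg.
  - move=> A g /Ap_info[H [-> sHG pH ntH aH]] gG.
    rewrite /f2D notD_conj //; case: ifP => // sHD.
    by rewrite conjIg conjsMg (Zs_conj (negbT sHD) sHG pH gG) (DJ p gG).
have e3 : emap G (Ap p G) f3D.
  have [loX lom loJ] := e2.
  split.
  - move=> A AX; have [K [E sKD aK ntK _]] := f2D_info ntD AX.
    have cKZ : K \subset 'C(ZD) := subset_trans sKD cDZ.
    have aZ : p.-abelem ZD by move: ZDX; rewrite ApP => /andP[].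
    rewrite /f3D E -(norm_joinEl (cents_norm cKZ)).
    rewrite -[K <*> _]/(gval (K <*> 'Ohm_1('Z(D)))%G); apply: ApI.
    + rewrite join_subG (subset_trans sKD sDG) /=.
      by move: ZDX; rewrite ApP => /andP[/SpP[H [<- sHG _ _]] _].
    + by apply: contra ntK => /eqP F; rewrite -subG1 -F joing_subl.
    + exact: abelem_join.
  - by move=> A B AX BX sAB; rewrite /f3D mulSg // lom.
  - by move=> A g AX gG; rewrite /f3D conjsMg loJ // ZDJ.
apply: (@contract4 _ G _ (@Ap_conj _ G p) f1D f2D f3D (fun _ => ZD) _ ZDX e1 e2 e3 (emap_const ZDX ZDJ)).
- move=> A AX; have [K [E sKD aK ntK _]] := f2D_info ntD AX.
  split.
  + by rewrite /f1D; case: ifP => // _; rewrite mulg_subl.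
  + by rewrite /f1D /f2D; case: ifP => // _; rewrite subsetIl.
  + by rewrite /f3D mulg_subl.
  + by rewrite /f3D E mulg_subr.
- by move=> A _; exists 1; rewrite ?group1 ?conjsg1.
- by [].
Qed.

End CaseAp.

Theorem main_thm (gT : finGroupType) (G : {group gT}) (p q alpha : nat) :
  prime p -> prime q -> #|G| = (p ^ alpha * q)%N -> p %| #|G| ->
  [/\ contractible (orbit_space G (Ap p G)),
      contractible (orbit_space G (Sp p G)) &
      contractible (orbit_space G (Bp p G))].
Proof.
move=> pp pq oG pG; have pG1 := pG; have pG2 := pG.
have [D1|ntD] := eqVneq ('O_p(G) : {set gT})%g 1%g.
  split.
  - exact: Ap_contr_1 pp pq oG D1 pG.
  - apply: (Syl_contr pp pq oG) D1 pG => //.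
      exact: Sp_conj.
    by move=> P sylP; apply: (Sylow_Sp pp pG1 sylP).
  - apply: (Syl_contr pp pq oG) D1 pG => //.
    + exact: Bp_conj.
    + by move=> A; rewrite BpP => /andP[].
    + move=> P sylP; rewrite BpP (Sylow_Sp pp pG2 sylP) /=.
      by rewrite (Sylow_radical sylP).
split.
- exact: Ap_contr_D pp pq oG ntD.
- exact: Sp_contr_D ntD.
- exact: Bp_contr_D ntD.
Qed.

End CasesM.
Import CasesM.

Theorem proposition5p6 (gT : finGroupType) (G : {group gT}) (p q alpha : nat) :
  prime p -> prime q -> #|G| = (p ^ alpha * q)%N -> p %| #|G| ->
  [/\ contractible (orbit_space G (Ap p G)),
      contractible (orbit_space G (Sp p G)) &
      contractible (orbit_space G (Bp p G))].
Proof. exact: main_thm. Qed.
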